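(* Let $\Omega\subset\mathbb{Z}^2$ be finite, let $u:\Omega\to\{0,1\}$ be a binary image with foreground $\mathbb{X}=\{y\in\Omega:u(y)=1\}$ and background $\mathbb{X}^c=\Omega\setminus\mathbb{X}$, and let $x\in\Omega$ be a point all of whose eight neighbors lie in $\Omega$. Then $x$ is a simple point if and only if $\mathcal{C}(u_m)[x]=2$.
   Context: Neighborhoods: for $x=(x_1,x_2)$, $\mathbb{N}_4(x)=\{x'\in\Omega:|x_1-x_1'|+|x_2-x_2'|\le1\}$, $\mathbb{N}_8(x)=\{x'\in\Omega:\max(|x_1-x_1'|,|x_2-x_2'|)\le1\}$, $\mathring{\mathbb{N}}_n(x)=\mathbb{N}_n(x)\setminus\{x\}$. Foreground is 8-connected, background 4-connected. Geodesic neighborhoods w.r.t. $\mathbb{Y}\subset\Omega$: $\mathbb{N}^1_n(x,\mathbb{Y})=\mathring{\mathbb{N}}_n(x)\cap\mathbb{Y}$, $\mathbb{N}^k_n(x,\mathbb{Y})=\bigcup\{\mathbb{N}_n(y)\cap\mathring{\mathbb{N}}_8(x)\cap\mathbb{Y}:y\in\mathbb{N}^{k-1}_n(x,\mathbb{Y})\}$ for $k\ge2$. $T_4(x,\mathbb{Y})$ = number of 4-connected components of $\mathbb{N}^2_4(x,\mathbb{Y})$; $T_8(x,\mathbb{Y})$ = number of 8-connected components of $\mathbb{N}^1_8(x,\mathbb{Y})$. $x$ is a simple point iff $T_4(x,\mathbb{X}^c)=1$ and $T_8(x,\mathbb{X})=1$. Cyclic neighborhood: label the eight neighbors of $x$ as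 $x_1$ (top-left), $x_2$ (top), $x_3$ (top-right), $x_4$ (right), $x_5$ (bottom-right), $x_6$ (bottom), $x_7$ (bottom-left), $x_8$ (left), and set $x_9=x_1$. For a binary function $f$ on these neighbors, the crossing number is $\mathcal{C}(f)[x]=\sum_{i=1}^8\delta(|f(x_{i+1})-f(x_i)|)$ with $\delta(1)=1,\delta(0)=0$, i.e. the number of value changes $0\to1$ or $1\to0$ going once around the cycle. Define $m$ on $\mathring{\mathbb{N}}_8(x)$ by $m(y)=1$ if $y\in\mathbb{N}^2_4(x,\mathbb{X}^c)$ and $m(y)=0$ otherwise, and $u_m(y)=1-m(y)(1-u(y))$ (so $u_m(y)=0$ exactly when $y\in\mathbb{N}^2_4(x,\mathbb{X}^c)$). *)

(* Defs.v *)
From HB Require Import structures.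
From mathcomp Require Import all_boot all_order all_algebra.
From mathcomp Require Import finmap.
Set Implicit Arguments. Unset Strict Implicit. Unset Printing Implicit Defensive.
Import Order.TTheory GRing.Theory Num.Theory.
Local Open Scope fset_scope.

Definition pt := (int * int)%type.

Definition d4 (x y : pt) : nat := (`|x.1 - y.1|%N + `|x.2 - y.2|%N)%N.
Definition d8 (x y : pt) : nat := maxn `|x.1 - y.1|%N `|x.2 - y.2|%N.

Definition N4 (Omega : {fset pt}) (x : pt) : {fset pt} :=
  [fset y in Omega | d4 x y <= 1]%N.
Definition N8 (Omega : {fset pt}) (x : pt) : {fset pt} :=
  [fset y in Omega | d8 x y <= 1]%N.
Definition N4o (Omega : {fset pt}) (x : pt) : {fset pt} := N4 Omega x `\ x.
Definition N8o (Omega : {fset pt}) (x : pt) : {fset pt} := N8 Omega x `\ x.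

Definition Nn (four : bool) Omega x := if four then N4 Omega x else N8 Omega x.
Definition Nno (four : bool) Omega x := if four then N4o Omega x else N8o Omega x.

(* Geodesic neighborhoods N^k_n(x, Y), for k >= 1 (geo four Omega x Y k.-1 = N^k). *)
Fixpoint geo (four : bool) (Omega : {fset pt}) (x : pt) (Y : {fset pt}) (k : nat)
  : {fset pt} :=
  match k with
  | 0 => Nno four Omega x `&` Y
  | k'.+1 => \bigcup_(y <- geo four Omega x Y k')
               (Nn four Omega y `&` N8o Omega x `&` Y)
  end.

Definition Ngeo (four : bool) Omega x Y (k : nat) := geo four Omega x Y k.-1.

Definition adj4 (y z : pt) : bool := d4 y z == 1%N.
Definition adj8 (y z : pt) : bool := (y != z) && (d8 y z <= 1)%N.

Definition ncomp (e : rel pt) (S : {fset pt}) : nat :=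
  n_comp (fun a b : S => e (val a) (val b)) predT.

Definition T4 Omega x Y := ncomp adj4 (Ngeo true Omega x Y 2).
Definition T8 Omega x Y := ncomp adj8 (Ngeo false Omega x Y 1).

Definition fg (Omega : {fset pt}) (u : pt -> bool) : {fset pt} := [fset y in Omega | u y].
Definition bg (Omega : {fset pt}) (u : pt -> bool) : {fset pt} := Omega `\` fg Omega u.

Definition simple_point Omega u x : Prop :=
  T4 Omega x (bg Omega u) = 1%N /\ T8 Omega x (fg Omega u) = 1%N.

(* Cyclic neighborhood: x_1 top-left, x_2 top, x_3 top-right, x_4 right,
   x_5 bottom-right, x_6 bottom, x_7 bottom-left, x_8 left, x_9 = x_1.
   Convention: x = (column, row), rows growing downwards ("top" = row - 1).
   cyc x i is x_{i+1} (0-indexed, taken mod 8). *)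
Definition cyc_off (i : nat) : int * int :=
  match (i %% 8)%N with
  | 0 => (-1, -1) | 1 => (0, -1) | 2 => (1, -1) | 3 => (1, 0)
  | 4 => (1, 1) | 5 => (0, 1) | 6 => (-1, 1) | _ => (-1, 0)
  end%R.
Definition cyc (x : pt) (i : nat) : pt :=
  ((x.1 + (cyc_off i).1)%R, (x.2 + (cyc_off i).2)%R).

(* delta on {0,1}, extended by delta(n) = (n != 0) *)
Definition delta (n : nat) : nat := (n != 0%N).

Definition crossing (f : pt -> nat) (x : pt) : nat :=
  \sum_(i < 8) delta `|(Posz (f (cyc x i.+1)) - Posz (f (cyc x i)))%R|%N.

Definition mfun Omega u x (y : pt) : nat := (y \in Ngeo true Omega x (bg Omega u) 2).
Definition um Omega u x (y : pt) : nat := (1 - mfun Omega u x y * (1 - u y))%N.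

(* Main.v *)
Require Import Defs.
From HB Require Import structures.
From mathcomp Require Import all_boot all_order all_algebra.
From mathcomp Require Import finmap.
Import GRing.Theory Num.Theory.
Definition I3 := (bool * bool * bool)%type.
Definition L3 : seq I3 := [:: (true,true,true); (true,true,false); (true,false,true); (true,false,false);
  (false,true,true); (false,true,false); (false,false,true); (false,false,false)].
Lemma enumI3 : Finite.enum I3 = L3.
Proof.
rewrite unlock /= /prod_enum enumT unlock /= /prod_enum !enumT !unlock /= /prod_enum !enumT !unlock /=. done.
Qed.
Definition n3 (i : I3) : nat := let: (a,b,c) := i in (4 * a + 2 * b + c)%N.
Definition t3 (k : nat) : I3 :=
  match (k %% 8)%N with
  | 0 => (false,false,false) | 1 => (false,false,true) | 2 => (false,true,false)
  | 3 => (false,true,true) | 4 => (true,false,false) | 5 => (true,false,true)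
  | 6 => (true,true,false) | _ => (true,true,true) end.
Definition off (i : I3) : pt := cyc_off (n3 i).
Definition o0 : pt := (0%R, 0%R).
Definition cadj (i j : I3) : bool :=
  ((n3 i).+1 %% 8 == n3 j)%N || ((n3 j).+1 %% 8 == n3 i)%N.
Definition A8 (i j : I3) : bool :=
  cadj i j || [&& odd (n3 i), odd (n3 j) & (((n3 i).+2 %% 8 == n3 j)%N || ((n3 j).+2 %% 8 == n3 i)%N)].
Definition Pb (b : I3 -> bool) (i : I3) : bool :=
  ~~ b i && has (fun j => odd (n3 j) && ~~ b j && ((n3 i == n3 j) || cadj j i)) L3.
Definition e4 b : rel I3 := fun i j => Pb b i && Pb b j && cadj i j.
Definition e8 (b : I3 -> bool) : rel I3 := fun i j => b i && b j && A8 i j.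
Definition umb b i : nat := (1 - Pb b i * (1 - b i))%N.
Definition crossb b : nat :=
  sumn [seq delta `|(Posz (umb b (t3 i.+1)) - Posz (umb b (t3 i)))%R|%N | i <- iota 0 8].
Definition ncnt (e : rel I3) (a : pred I3) : nat :=
  count (fun x => let r := dfs (fun w => filter (e w) L3) 8 [::] x in (odflt x (ohead (filter (fun z => z \in r) L3)) == x) && a x) L3.

Lemma ncompE (e : rel I3) (a : pred I3) : n_comp e a = ncnt e a.
Proof.
rewrite /n_comp_mem cardE /enum_mem size_filter enumI3.
rewrite /ncnt.
apply: (@eq_count _ (mem (predI (roots e) (mem a)))) => x.
rewrite [in LHS]inE.
rewrite /roots /fingraph.root.
rewrite /connect /rgraph /pick /enum_mem.
have -> : #|{: I3}| = 8%N by rewrite cardE /enum_mem size_filter count_predT enumI3.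
rewrite !enumI3.
reflexivity.
Qed.
Fixpoint allbits (n : nat) : seq (seq bool) :=
  if n is n'.+1 then [seq b :: v | b <- [:: true; false], v <- allbits n'] else [:: [::]].
Lemma allbitsP (v : seq bool) : v \in allbits (size v).
Proof.
elim: v => [|b v IH] //=.
have := @allpairs_f _ _ _ (fun b v => b :: v) [:: true; false] (allbits (size v)) b v.
by apply; case: b.
Qed.
Definition mkbs (v : seq bool) (i : I3) : bool := nth false v (n3 i).
Definition keyb (b : I3 -> bool) : bool :=
  ((ncnt (e4 b) (Pb b) == 1%N) && (ncnt (e8 b) b == 1%N)) == (crossb b == 2%N).
Lemma keyall : all (fun v => keyb (mkbs v)) (allbits 8).
Proof. vm_compute. reflexivity. Qed.
Lemma key (v : seq bool) : size v = 8%N ->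
  let b := mkbs v in
  ((n_comp (e4 b) (Pb b) == 1%N) && (n_comp (e8 b) b == 1%N)) = (crossb b == 2%N).
Proof.
move=> hv /=; rewrite !ncompE; apply/eqP; move/allP: keyall; apply.
by rewrite -hv allbitsP.
Qed.

Local Open Scope fset_scope.

Lemma ncomp_transport (e : rel pt) (S : {fset pt}) (f : I3 -> pt) (Q : pred I3) (e' : rel I3) :
  injective f -> symmetric e -> symmetric e' ->
  (forall z, (z \in S) = has (fun i => (z == f i) && Q i) L3) ->
  (forall i j, Q i -> Q j -> e (f i) (f j) = e' i j) ->
  (forall i j, e' i j -> Q i && Q j) ->
  ncomp e S = n_comp e' Q.
Proof.
move=> finj esym esym' hS hrel hQ.
pose d : I3 := (false, false, false).
pose p (z : S) := fun i => (val z == f i) && Q i.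
pose h (z : S) : I3 := nth d L3 (find (p z) L3).
have hp : forall z : S, p z (h z).
  move=> z; apply: nth_find; rewrite -hS; exact: valP.
have hf : forall z : S, f (h z) = val z by move=> z; case/andP: (hp z) => /eqP ->.
have hq : forall z : S, Q (h z) by move=> z; case/andP: (hp z).
pose eS := fun a b : S => e (val a) (val b).
have symS : connect_sym eS by apply: sym_connect_sym => a b; rewrite /eS esym.
have sym' : connect_sym e' by apply: sym_connect_sym.
have cl : closed e' Q.
  by move=> i j /hQ /andP[Qi Qj]; rewrite !unfold_in Qi Qj.
have hinj : injective h.
  by move=> z1 z2 eq12; apply: val_inj; rewrite -!hf eq12.
have hcod : Q \subset codom h.
  apply/subsetP => i Qi.
  have iS : f i \in S by rewrite hS; apply/hasP; exists i; [case: i {Qi} => [[[] []] []] | rewrite eqxx; exact: Qi].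
  apply/codomP; exists [` iS]; apply: finj; by rewrite hf.
have hbase : rel_base h e' eS [predC Q].
  move=> z1 z2 _; rewrite /eS -!hf hrel //.
rewrite (adjunction_n_comp h sym' symS cl (strict_adjunction symS cl hinj hcod hbase)).
rewrite /ncomp; apply: eq_n_comp_r => z; rewrite !inE; symmetry; exact: hq.
Qed.

Definition sh (x a : pt) : pt := ((x.1 + a.1)%R, (x.2 + a.2)%R).
Definition cyc3 (x : pt) (i : I3) : pt := cyc x (n3 i).
Lemma cyc3E x i : cyc3 x i = sh x (off i). Proof. by []. Qed.

Lemma subDD (p q r : int) : ((p + q) - (p + r))%R = (q - r)%R.
Proof. by rewrite opprD addrACA subrr add0r. Qed.
Lemma subD0 (p r : int) : (p - (p + r))%R = (0 - r)%R.
Proof. by rewrite -{1}(addr0 p) subDD. Qed.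

Lemma d4_sh x a c : d4 (sh x a) (sh x c) = d4 a c.
Proof. by rewrite /d4 /sh /= !subDD. Qed.
Lemma d8_sh x a c : d8 (sh x a) (sh x c) = d8 a c.
Proof. by rewrite /d8 /sh /= !subDD. Qed.
Lemma d4_shx x a : d4 x (sh x a) = d4 o0 a.
Proof. by rewrite /d4 /sh /= !subD0. Qed.
Lemma d8_shx x a : d8 x (sh x a) = d8 o0 a.
Proof. by rewrite /d8 /sh /= !subD0. Qed.
Lemma eq_sh x a c : (sh x a == sh x c) = (a == c).
Proof. by rewrite /sh !xpair_eqE !(inj_eq (@addrI _ _)). Qed.
Lemma shx_eq x a : (sh x a == x) = (a == o0).
Proof.
have e : x = sh x o0 by rewrite /sh /= !addr0 -surjective_pairing.
by rewrite {2}e eq_sh.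
Qed.

Lemma adj4_off i j : adj4 (off i) (off j) = cadj i j.
Proof. by case: i => [[[] []] []]; case: j => [[[] []] []]. Qed.
Lemma adj8_off i j : adj8 (off i) (off j) = A8 i j.
Proof. by case: i => [[[] []] []]; case: j => [[[] []] []]. Qed.
Lemma d4o0_off j : (d4 o0 (off j) <= 1)%N = odd (n3 j).
Proof. by case: j => [[[] []] []]. Qed.
Lemma d4_off i j : (d4 (off j) (off i) <= 1)%N = (n3 i == n3 j) || cadj j i.
Proof. by case: i => [[[] []] []]; case: j => [[[] []] []]. Qed.
Lemma d8o0_off j : (d8 o0 (off j) <= 1)%N.
Proof. by case: j => [[[] []] []]. Qed.
Lemma off_ne0 j : (off j == o0) = false.
Proof. by case: j => [[[] []] []]. Qed.
Lemma off_inj : injective off.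
Proof. by move=> i j /eqP; case: i => [[[] []] []]; case: j => [[[] []] []]. Qed.
Lemma cyc3_inj x : injective (cyc3 x).
Proof. by move=> i j /eqP; rewrite !cyc3E eq_sh => /eqP /off_inj. Qed.
Lemma n3_lt i : (n3 i < 8)%N.
Proof. by case: i => [[[] []] []]. Qed.
Lemma memL3 i : i \in L3.
Proof. by case: i => [[[] []] []]. Qed.

Lemma off_surj (a : pt) : (d8 o0 a <= 1)%N -> a != o0 -> has (fun i => a == off i) L3.
Proof.
case: a => a1 a2; rewrite /d8 /= !sub0r !abszN geq_max => /andP[].
by case: a1 => [[|[|n1]]|[|n1]] //= _; case: a2 => [[|[|n2]]|[|n2]].
Qed.

Section Mem.
Variables (Omega : {fset pt}) (u : pt -> bool) (x : pt) (b : I3 -> bool).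
Hypothesis hO : forall i, cyc3 x i \in Omega.
Hypothesis hb : forall i, b i = u (cyc3 x i).

Lemma N8oP z : (z \in N8o Omega x) = has (fun i => z == cyc3 x i) L3.
Proof.
rewrite /N8o /N8 !inE; apply/idP/hasP.
  case/and3P => zx zO d.
  set a : pt := ((z.1 - x.1)%R, (z.2 - x.2)%R).
  have ez : z = sh x a by rewrite /sh /= !subrKC -surjective_pairing.
  rewrite ez d8_shx in d; rewrite ez shx_eq in zx.
  case/hasP: (off_surj a d zx) => i _ /eqP hi.
  by exists i; [exact: memL3 | rewrite ez cyc3E hi].
case=> i _ /eqP ->; apply/and3P; split.
- by rewrite cyc3E shx_eq off_ne0.
- exact: hO.
- by rewrite cyc3E d8_shx d8o0_off.
Qed.

Lemma bgE i : (cyc3 x i \in bg Omega u) = ~~ b i.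
Proof. by rewrite /bg /fg !inE hO hb andbT. Qed.
Lemma fgE i : (cyc3 x i \in fg Omega u) = b i.
Proof. by rewrite /fg !inE hO hb. Qed.
Lemma N4oE i : (cyc3 x i \in N4o Omega x) = odd (n3 i).
Proof. by rewrite /N4o /N4 !inE hO /= cyc3E shx_eq off_ne0 d4_shx d4o0_off. Qed.
Lemma N4E i j : (cyc3 x i \in N4 Omega (cyc3 x j)) = (n3 i == n3 j) || cadj j i.
Proof. by rewrite /N4 !inE hO /= !cyc3E d4_sh d4_off. Qed.
Lemma N4o_sub z : z \in N4o Omega x -> z \in N8o Omega x.
Proof.
rewrite /N4o /N8o /N4 /N8 !inE => /and3P[-> -> d] /=.
apply: leq_trans d; rewrite /d4 /d8 geq_max leq_addr leq_addl //.
Qed.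

Lemma Ngeo2E z : (z \in Ngeo true Omega x (bg Omega u) 2) = has (fun i => (z == cyc3 x i) && Pb b i) L3.
Proof.
rewrite /Ngeo; apply/bigfcupP/hasP.
  case=> y /andP[yin _] zin.
  have yin' : y \in (N4o Omega x `&` bg Omega u) := yin.
  move: yin'; rewrite in_fsetI => /andP[y4 ybg].
  move: (N4o_sub _ y4). rewrite (N8oP y) => /hasP[j _ /eqP yj].
  move: zin; rewrite !in_fsetI => /andP[/andP[z4 z8] zbg].
  move: z8; rewrite N8oP => /hasP[i _ /eqP zi].
  exists i; first exact: memL3.
  rewrite zi eqxx andTb; rewrite zi bgE in zbg; rewrite yj N4oE in y4; rewrite yj bgE in ybg.
  rewrite /Pb zbg andTb; apply/hasP; exists j; first exact: memL3.
  by rewrite y4 ybg /= -N4E -zi -yj.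
case=> i _ /andP[/eqP -> /andP[nbi /hasP[j _ /andP[/andP[oj nbj] adj]]]].
exists (cyc3 x j).
  rewrite andbT; have -> : (cyc3 x j \in geo true Omega x (bg Omega u) 0) = (cyc3 x j \in (N4o Omega x `&` bg Omega u)) by [].
  by rewrite in_fsetI N4oE bgE oj nbj.
rewrite !in_fsetI N4E adj N8oP bgE nbi andbT andTb.
by apply/hasP; exists i; [exact: memL3 | rewrite eqxx].
Qed.

Lemma Ngeo1E z : (z \in Ngeo false Omega x (fg Omega u) 1) = has (fun i => (z == cyc3 x i) && b i) L3.
Proof.
rewrite /Ngeo [geo _ _ _ _ _]/= in_fsetI /Nno N8oP; apply/andP/hasP.
  case=> /hasP[i _ /eqP zi] zfg; exists i; first exact: memL3.
  by rewrite zi eqxx -fgE -zi.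
case=> i _ /andP[/eqP -> bi]; split; last by rewrite fgE.
by apply/hasP; exists i; [exact: memL3 | rewrite eqxx].
Qed.
End Mem.

Lemma adj4_sh x a c : adj4 (sh x a) (sh x c) = adj4 a c.
Proof. by rewrite /adj4 d4_sh. Qed.
Lemma adj8_sh x a c : adj8 (sh x a) (sh x c) = adj8 a c.
Proof. by rewrite /adj8 d8_sh eq_sh. Qed.
Lemma abs_sym (p q : int) : `|(p - q)%R|%N = `|(q - p)%R|%N.
Proof. by rewrite -abszN opprB. Qed.
Lemma adj4_sym : symmetric adj4.
Proof. by move=> y z; rewrite /adj4 /d4 (abs_sym y.1) (abs_sym y.2). Qed.
Lemma adj8_sym : symmetric adj8.
Proof. by move=> y z; rewrite /adj8 /d8 eq_sym (abs_sym y.1) (abs_sym y.2). Qed.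

Lemma n3t3 k : n3 (t3 k) = (k %% 8)%N.
Proof.
rewrite /t3; have : (k %% 8 < 8)%N by rewrite ltn_pmod.
by case: (k %% 8)%N => [|[|[|[|[|[|[|[|n]]]]]]]].
Qed.
Lemma cyc_t3 x k : cyc x k = cyc3 x (t3 k).
Proof.
by rewrite /cyc3 /cyc n3t3 /cyc_off modn_mod.
Qed.

Theorem theorem2 (Omega : {fset pt}) (u : pt -> bool) (x : pt) :
  x \in Omega ->
  (forall i : nat, (i < 8)%N -> cyc x i \in Omega) ->
  simple_point Omega u x <-> crossing (um Omega u x) x = 2%N.
Proof.
move=> _ hO8.
have hO : forall i, cyc3 x i \in Omega by move=> i; apply: hO8; exact: n3_lt.
pose v := [:: u (cyc x 0); u (cyc x 1); u (cyc x 2); u (cyc x 3);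
              u (cyc x 4); u (cyc x 5); u (cyc x 6); u (cyc x 7)].
pose b := mkbs v.
have hb : forall i, b i = u (cyc3 x i) by case=> [[[] []] []].
have E4 : T4 Omega x (bg Omega u) = n_comp (e4 b) (Pb b).
  rewrite /T4 (@ncomp_transport adj4 _ (cyc3 x) (Pb b) (e4 b)).
  - by [].
  - exact: cyc3_inj.
  - exact: adj4_sym.
  - by move=> i j; rewrite /e4 /cadj [Pb b i && _]andbC orbC.
  - exact: (@Ngeo2E Omega u x b hO hb).
  - by move=> i j Pi Pj; rewrite /e4 Pi Pj !cyc3E adj4_sh adj4_off.
  - by move=> i j /andP[].
have E8 : T8 Omega x (fg Omega u) = n_comp (e8 b) b.
  rewrite /T8 (@ncomp_transport adj8 _ (cyc3 x) b (e8 b)).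
  - by [].
  - exact: cyc3_inj.
  - exact: adj8_sym.
  - by move=> i j; rewrite /e8 [b i && _]andbC; congr (_ && _); case: i => [[[] []] []]; case: j => [[[] []] []].
  - exact: (@Ngeo1E Omega u x b hO hb).
  - by move=> i j Pi Pj; rewrite /e8 Pi Pj !cyc3E adj8_sh adj8_off.
  - by move=> i j /andP[].
have EC : crossing (um Omega u x) x = crossb b.
  rewrite /crossing /crossb sumnE big_map; have -> : iota 0 8 = index_iota 0 8 by []. rewrite big_mkord.
  apply: eq_bigr => i _.
  have umE : forall k, um Omega u x (cyc x k) = umb b (t3 k).
    move=> k; rewrite cyc_t3 /um /mfun /umb (@Ngeo2E Omega u x b hO hb) hb.
    congr (1 - _ * _)%N; congr nat_of_bool.
    apply/hasP/idP => [[j _ /andP[/eqP /cyc3_inj <- //]] | Pk].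
    by exists (t3 k); [exact: memL3 | rewrite eqxx].
  by rewrite !umE.
have K := @key v erefl.
rewrite /simple_point E4 E8 EC; split.
  by move=> [h1 h2]; apply/eqP; rewrite -K h1 h2.
by move/eqP; rewrite -K => /andP[/eqP -> /eqP ->].
Qed.
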